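(* Let $M$ be a closed Riemannian manifold with fundamental group $\Gamma$ and universal cover $\widetilde{M}$, let $\Gamma$ act freely and continuously on a Cantor set $X$, and let $\Gamma$ act diagonally on $X\times\widetilde{M}$ (via deck transformations on $\widetilde{M}$). Let $\Gamma(A_1 \times S_1), \ldots, \Gamma(A_r \times S_r)$ be finitely many thick orbits in $X \times \widetilde{M}$. Then for any ball $B(\widetilde{p}, R)$ in $\widetilde{M}$, there exists a partition of $X$ into finitely many clopen sets $X_1, \ldots, X_k$ such that for any $i \in \{1, \ldots, k\}$, any $x, y \in X_i$, any $\widetilde{q} \in B(\widetilde{p}, R)$, and any $j \in \{1, \ldots, r\}$, we have $(x, \widetilde{q}) \in \Gamma(A_j \times S_j)$ if and only if $(y, \widetilde{q}) \in \Gamma(A_j \times S_j)$.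
   Context: A thick set is a subset of $X\times\widetilde{M}$ of the form $A\times S$ with $A\subseteq X$ clopen and $S\subseteq\widetilde{M}$ bounded. A thick set has a non-self-intersecting orbit if it is disjoint from each of its translates $\gamma(A\times S)$, $\gamma\neq 1$; in that case the union $\Gamma(A\times S)$ of it and all its translates is called a thick orbit. *)

(* Defs.v *)
From HB Require Import structures.
From mathcomp Require Import all_boot all_order all_algebra.
From mathcomp Require Import all_classical all_reals all_analysis.
Set Implicit Arguments. Unset Strict Implicit. Unset Printing Implicit Defensive.
Import Order.TTheory GRing.Theory Num.Theory.
Local Open Scope classical_set_scope.
Local Open Scope ring_scope.

Record group := Group {
  gcar :> Type;
  gmul : gcar -> gcar -> gcar;
  gone : gcar;
  ginv : gcar -> gcar;
  gmulA : forall a b c, gmul a (gmul b c) = gmul (gmul a b) c;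
  gmul1g : forall a, gmul gone a = a;
  gmulVg : forall a, gmul (ginv a) a = gone }.

Definition is_action (G : group) (T : Type) (act : G -> T -> T) :=
  (forall x, act (gone G) x = x) /\
  (forall g h x, act (gmul g h) x = act g (act h x)).

Definition free_action (G : group) (T : Type) (act : G -> T -> T) :=
  forall g x, act g x = x -> g = gone G.

Definition is_cantor_set (X : topologicalType) :=
  exists (f : X -> cantor_space) (g : cantor_space -> X),
    cancel f g /\ cancel g f /\ continuous f /\ continuous g.

Definition mbounded {R : realType} {M : pseudoMetricType R} (S : set M) :=
  exists (p : M) (r : R), S `<=` ball p r.

Definition isometric_action {R : realType} {M : pseudoMetricType R}
  (G : group) (act : G -> M -> M) :=
  forall g (x y : M) (e : R), ball x e y <-> ball (act g x) e (act g y).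

Definition properly_discontinuous {M : topologicalType}
  (G : group) (act : G -> M -> M) :=
  forall K : set M, compact K ->
    finite_set [set g : G | (act g @` K) `&` K !=set0].

Definition cocompact {M : topologicalType} (G : group) (act : G -> M -> M) :=
  exists K : set M, compact K /\ forall q, exists g : G, K (act g q).

Definition translate {G : group} {X M : Type} (actX : G -> X -> X)
  (actM : G -> M -> M) (g : G) (A : set X) (S : set M) : set (X * M) :=
  [set z | exists a s, A a /\ S s /\ z = (actX g a, actM g s)].

Definition thick_set {R : realType} {X : topologicalType} {M : pseudoMetricType R}
  (A : set X) (S : set M) := clopen A /\ mbounded S.

Definition non_self_intersecting {G : group} {X M : Type} (actX : G -> X -> X)
  (actM : G -> M -> M) (A : set X) (S : set M) :=
  forall g : G, g <> gone G -> translate actX actM g A S `&` (A `*` S) = set0.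

Definition thick_orbit {G : group} {X M : Type} (actX : G -> X -> X)
  (actM : G -> M -> M) (A : set X) (S : set M) : set (X * M) :=
  \bigcup_(g in [set: G]) translate actX actM g A S.

(* Main.v *)
Require Import Defs.
From HB Require Import structures.
From mathcomp Require Import all_boot all_order all_algebra.
From mathcomp Require Import all_classical all_reals all_analysis.
Local Open Scope classical_set_scope.
Local Open Scope ring_scope.

Lemma gmulgV (G : group) (a : G) : gmul a (ginv a) = gone G.
Proof.
have e : gmul a (ginv a) = gmul (gmul (ginv (ginv a)) (ginv a)) (gmul a (ginv a)).
  by rewrite gmulVg gmul1g.
rewrite e -gmulA (gmulA (ginv a) a) gmulVg gmul1g; exact: gmulVg.
Qed.

Lemma bigI_mem (X : Type) (I : eqType) (F : I -> set X) (s : seq I) x :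
  (\big[setI/setT]_(l <- s) F l) x <-> forall l, l \in s -> F l x.
Proof.
elim: s => [|a s IH]; first by rewrite big_nil; split.
rewrite big_cons; split.
  move=> [Fa /IH H] l; rewrite in_cons => /orP[/eqP->//|]; exact: H.
move=> H; split; first by apply: H; rewrite mem_head.
by apply/IH => l ls; apply: H; rewrite in_cons ls orbT.
Qed.

Lemma cell_partition (X : topologicalType) (I : finType) (B : I -> set X) :
  (forall l, clopen (B l)) ->
  exists k (P : 'I_k -> set X),
    (forall i, clopen (P i)) /\
    (forall i, P i !=set0) /\
    (forall i i', i <> i' -> P i `&` P i' = set0) /\
    (\bigcup_(i in [set: 'I_k]) P i = [set: X]) /\
    (forall i x y, P i x -> P i y -> forall l, B l x <-> B l y).
Proof.
move=> Bc.
pose cell (f : {ffun I -> bool}) :=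
  \big[setI/setT]_(l <- enum I) (if f l then B l else ~` B l).
have cellP f x : cell f x <-> forall l, (B l x <-> f l).
  rewrite /cell bigI_mem; split.
    move=> H l; have := H l (mem_enum _ l); case: (f l) => /= Hn.
      by split.
    by split => // /Hn.
  move=> H l _; have := H l; case: (f l) => /= Hl; first by apply/Hl.
  by move=> Bl; have := (proj1 Hl) Bl.
have cellC f : clopen (cell f).
  rewrite /cell; apply: (big_ind (fun A => clopen A)) => //.
  - exact: clopenT.
  - by move=> ? ? ? ?; apply: clopenI.
  - move=> l _ /=; case: (f l).
      exact: Bc.
    exact: (@clopenC _ _ set0 (Bc l)).
pose Sset := [set f : {ffun I -> bool} | `[< cell f !=set0 >] ].
exists #|Sset|, (fun i => cell (enum_val i)).
split; first by move=> i; exact: cellC.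
split; first by move=> i; have := enum_valP i; rewrite inE => /asboolP.
split.
  move=> i i' ne; apply/seteqP; split => // x [/cellP h1 /cellP h2].
  apply: ne; apply: enum_val_inj; apply/ffunP => l.
  move: (h1 l) (h2 l).
  case: (enum_val i l); case: (enum_val i' l) => //= H1 H2.
    by have := proj1 H2 (proj2 H1 isT).
  by have := proj1 H1 (proj2 H2 isT).
split.
  apply/seteqP; split => // x _.
  pose fx := [ffun l => `[< B l x >] ].
  have hx : cell fx x.
    by apply/cellP => l; rewrite ffunE; split => [?|/asboolP//]; apply/asboolP.
  have fxS : fx \in Sset by rewrite inE; apply/asboolP; exists x.
  by exists (enum_rank_in fxS fx) => //; rewrite enum_rankK_in.
move=> i x y /cellP hx /cellP hy l; move: (hx l) (hy l); tauto.
Qed.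

Theorem proposition4p1
  (R : realType) (Gamma : group)
  (X : topologicalType) (actX : Gamma -> X -> X)
  (Mt : pseudoMetricType R) (actM : Gamma -> Mt -> Mt)
  (hX : is_cantor_set X) (hactX : is_action actX) (hfreeX : free_action actX)
  (hcontX : forall g, continuous (actX g))
  (hMhaus : hausdorff_space Mt) (hMconn : connected [set: Mt])
  (hMproper : forall (p : Mt) (r : R), compact (closure (ball p r)))
  (hactM : is_action actM) (hfreeM : free_action actM)
  (hisoM : isometric_action actM) (hpdM : properly_discontinuous actM)
  (hcocM : cocompact actM)
  (r : nat) (A : 'I_r -> set X) (S : 'I_r -> set Mt)
  (hthick : forall j, thick_set (A j) (S j))
  (hnsi : forall j, non_self_intersecting actX actM (A j) (S j))
  (p : Mt) (Rad : R) :
  exists (k : nat) (P : 'I_k -> set X),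
    (forall i, clopen (P i)) /\
    (forall i, P i !=set0) /\
    (forall i i', i <> i' -> P i `&` P i' = set0) /\
    (\bigcup_(i in [set: 'I_k]) P i = [set: X]) /\
    (forall i x y q j, P i x -> P i y -> ball p Rad q ->
       (thick_orbit actX actM (A j) (S j) (x, q) <->
        thick_orbit actX actM (A j) (S j) (y, q))).
Proof.
have : forall j, exists v : Mt * R, S j `<=` ball v.1 v.2.
  by move=> j; have [_ [p0 [r0 H]]] := hthick j; exists (p0, r0).
move=> /boolp.choice [pr Hpr].
pose K j := closure (ball (pr j).1 (pr j).2) `|` closure (ball p Rad).
pose F j := [set g : Gamma | (actM g @` K j) `&` K j !=set0].
have Ffin j : finite_set (F j).
  by apply: hpdM; apply: compactU; apply: hMproper.
have : forall j, exists v : seq {classic Gamma}, F j = [set` v].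
  move=> j; exact: (@finite_seqP {classic Gamma} (F j)).1.
move=> /boolp.choice [s Hs].
pose N := (\max_(j < r) size (s j))%N.
pose B (l : 'I_r * 'I_N) := actX (nth (gone Gamma) (s l.1) l.2) @` A l.1.
have BE g (D : set X) : actX g @` D = actX (ginv g) @^-1` D.
  apply/seteqP; split => x /=.
    by move=> [a Da <-]; rewrite -hactX.2 gmulVg hactX.1.
  by move=> Dx; exists (actX (ginv g) x) => //; rewrite -hactX.2 gmulgV hactX.1.
have Bc l : clopen (B l).
  rewrite /B BE; apply: preimage_clopen; first exact: (hthick l.1).1.
  exact: hcontX.
have [k [P [Pc [Pn [Pd [Pcov Pinv]]]]]] := @cell_partition _ _ B Bc.
exists k, P; do 4 (split => //).
suff H : forall i x y q j, P i x -> P i y -> ball p Rad q ->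
  thick_orbit actX actM (A j) (S j) (x, q) ->
  thick_orbit actX actM (A j) (S j) (y, q).
  move=> i x y q j Px Py Bq; split; [exact: (H i x y) | exact: (H i y x)].
move=> i x y q j Px Py Bq [g _ [a [s0 [Aa [Ss e]]]]].
case: e => ex eq.
have gF : F j g.
  exists (actM g s0); split; first by exists s0 => //; left; apply: subset_closure; apply: Hpr.
  by rewrite -eq; right; apply: subset_closure.
have gs : (g : {classic Gamma}) \in s j by move: gF; rewrite Hs.
have mN : (index (g : {classic Gamma}) (s j) < N)%N.
  apply: (leq_trans _ (leq_bigmax j)); by rewrite index_mem.
have ngE : nth (gone Gamma) (s j) (index (g : {classic Gamma}) (s j)) = g.
  exact: (@nth_index {classic Gamma}).
have Bx : B (j, Ordinal mN) x.
  by rewrite /B /= ngE; exists a.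
have := (Pinv i x y Px Py (j, Ordinal mN)).1 Bx.
rewrite /B /= ngE => -[a' Aa' ey].
exists g => //; exists a', s0; split => //; split => //.
by rewrite ey eq.
Qed.
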